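(* The map $\mathbb B_{\mathrm{cut}}\to\mathbb V_{\mathrm{vt}}(\overline K)$, $B\mapsto\omega_B$ (taking the equivalence class of $\omega_B$), is an isomorphism of posets, where $\mathbb B_{\mathrm{cut}}$ is ordered by $B\le C\iff B\supseteq C$.
   Context: $(K,v)$ is a valued field, $\overline K$ an algebraic closure, $\bar v$ a fixed extension of $v$ to $\overline K$ with value group $\Gamma$. A cut is a pair $\delta=(\delta^L,\delta^R)$ of subsets of $\Gamma$ with $\delta^L<\delta^R$, $\delta^L\cup\delta^R=\Gamma$; $B(a,\delta)=\{c\in\overline K\mid\bar v(c-a)>\delta^L\}$ and $\mathbb B_{\mathrm{cut}}$ is the set of these subsets of $\overline K$. $\Gamma(\delta)=x_\delta\mathbb Z\oplus\Gamma$ ordered with $\delta^L<x_\delta<\delta^R$, and $\omega_{B(a,\delta)}(\sum a_n(x-a)^n)=\min_n\{\bar v(a_n)+nx_\delta\}$. $\mathbb V_{\mathrm{vt}}(\overline K)$ is the set of equivalence classes (under $\nu=\iota\circ\mu$ for an order isomorphism $\iota$ of value groups) of value-transcendental valuations on $\overline K(x)$ extending $\bar v$ (i.e. $\Gamma_\omega/\Gamma$ not torsion). Its partial order: for classes $\mu\ne\nu$, $\mu\le\nu$ iff for every $f\in\overline K[x]$ there is $\gamma\in\Gamma$ with $\mu(f)\le\gamma\le\nu(f)$ (this is independent of representatives). *)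

(* Defs.v *)
From HB Require Import structures.
From mathcomp Require Import all_boot all_order all_algebra.
From Stdlib Require Import ClassicalEpsilon.

Set Implicit Arguments.
Unset Strict Implicit.
Unset Printing Implicit Defensive.

Import GRing.Theory Num.Theory.
Local Open Scope ring_scope.

Definition is_oag (G : zmodType) (le : G -> G -> Prop) : Prop :=
  [/\ (forall x, le x x),
      (forall x y, le x y -> le y x -> x = y),
      (forall x y z, le x y -> le y z -> le x z),
      (forall x y, le x y \/ le y x)
    & (forall x y z, le x y -> le (x + z) (y + z))].

Definition ltof (G : Type) (le : G -> G -> Prop) (x y : G) : Prop :=
  le x y /\ x <> y.

(** [v : L -> Γ] is a valuation on the field [L] whose value group is
    (the ordered abelian group) [Γ]; the value of [0] (= infinity) is
    never used. *)
Definition is_valuation (L : fieldType) (Γ : zmodType) (le : Γ -> Γ -> Prop)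
    (v : L -> Γ) : Prop :=
  [/\ is_oag le,
      (forall x y, x != 0 -> y != 0 -> v (x * y) = v x + v y),
      (forall x y, x != 0 -> y != 0 -> x + y != 0 ->
         le (v x) (v (x + y)) \/ le (v y) (v (x + y)))
    & (forall g, exists x, x != 0 /\ v x = g)].

Record cut (Γ : Type) := Cut { cutL : Γ -> Prop; cutR : Γ -> Prop }.

Definition is_cut (Γ : Type) (le : Γ -> Γ -> Prop) (d : cut Γ) : Prop :=
  (forall a b, cutL d a -> cutR d b -> ltof le a b) /\
  (forall g, cutL d g \/ cutR d g).

(** The ball [B(a, δ) = {c | v(c - a) > δ^L}] (with [v 0 = ∞]). *)
Definition ball (L : fieldType) (Γ : zmodType) (le : Γ -> Γ -> Prop)
    (v : L -> Γ) (a : L) (d : cut Γ) : L -> Prop :=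
  fun c => c = a \/ (forall l, cutL d l -> ltof le l (v (c - a))).

(** A (Krull) valuation on [L[x]] (equivalently on [L(x)]) together with
    its codomain ordered group and the embedding of [Γ] in it.  The value
    at the zero polynomial (= infinity) is never used. *)
Record pvaluation (L : fieldType) (Γ : zmodType) := PVal {
  pv_G : zmodType;
  pv_le : pv_G -> pv_G -> Prop;
  pv_emb : Γ -> pv_G;
  pv_fun : {poly L} -> pv_G }.

Definition is_ext_val (L : fieldType) (Γ : zmodType) (le : Γ -> Γ -> Prop)
    (v : L -> Γ) (w : pvaluation L Γ) : Prop :=
  is_oag (@pv_le _ _ w) /\
  [/\ (forall a b, pv_emb w (a + b) = pv_emb w a + pv_emb w b),
      (forall a b, pv_le (pv_emb w a) (pv_emb w b) <-> le a b),
      (forall c, c != 0 -> pv_fun w c%:P = pv_emb w (v c)),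
      (forall f g, f != 0 -> g != 0 -> pv_fun w (f * g) = pv_fun w f + pv_fun w g)
    & (forall f g, f != 0 -> g != 0 -> f + g != 0 ->
         pv_le (pv_fun w f) (pv_fun w (f + g)) \/
         pv_le (pv_fun w g) (pv_fun w (f + g)))].

Definition in_vgroup (L : fieldType) (Γ : zmodType) (w : pvaluation L Γ)
    (g : pv_G w) : Prop :=
  exists f h, [/\ f != 0, h != 0 & g = pv_fun w f - pv_fun w h].
Arguments in_vgroup {L Γ} w g.

Definition value_transcendental (L : fieldType) (Γ : zmodType)
    (w : pvaluation L Γ) : Prop :=
  exists g, in_vgroup w g /\
    forall n : nat, (0 < n)%N -> forall c : Γ, g *+ n <> pv_emb w c.

Definition val_equiv (L : fieldType) (Γ : zmodType) (w1 w2 : pvaluation L Γ)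
    : Prop :=
  exists iota : pv_G w1 -> pv_G w2,
  [/\ (forall a, in_vgroup w1 a -> in_vgroup w2 (iota a)),
      (forall a b, in_vgroup w1 a -> in_vgroup w1 b -> iota (a + b) = iota a + iota b),
      (forall a b, in_vgroup w1 a -> in_vgroup w1 b ->
         (pv_le a b <-> pv_le (iota a) (iota b))),
      (forall c, in_vgroup w2 c -> exists2 a, in_vgroup w1 a & iota a = c)
    & (forall f, f != 0 -> pv_fun w2 f = iota (pv_fun w1 f))].

Definition val_le (L : fieldType) (Γ : zmodType) (w1 w2 : pvaluation L Γ)
    : Prop :=
  val_equiv w1 w2 \/
  (forall f : {poly L}, f != 0 -> exists c : Γ,
     pv_le (pv_fun w1 f) (pv_emb w1 c) /\ pv_le (pv_emb w2 c) (pv_fun w2 f)).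

(** The ordered group [Γ(δ) = x_δ Z ⊕ Γ], represented by [int * Γ]
    ([(n, γ)] stands for [n x_δ + γ]), ordered so that [δ^L < x_δ < δ^R]:
    [(m,β) ≤ (n,β')] iff [k x_δ + b ≤ 0] with [k = m - n], [b = β - β'];
    for [k > 0] this means [-b/k ∈ δ^R], for [k < 0] it means [b/|k| ∈ δ^L]
    ([Γ] being divisible). *)
Definition cut_le (Γ : zmodType) (le : Γ -> Γ -> Prop) (d : cut Γ)
    (p q : int * Γ) : Prop :=
  let k := p.1 - q.1 in
  let b := p.2 - q.2 in
  if k == 0 then le b 0
  else if 0 < k then exists r, cutR d r /\ le (r *~ k + b) 0
  else exists l, cutL d l /\ le b (l *~ (- k)).

(** [ω_{B(a,δ)}(Σ a_n (x-a)^n) = min_n (v(a_n) + n x_δ)] (over [a_n ≠ 0]). *)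
Definition omega_fun (L : fieldType) (Γ : zmodType) (le : Γ -> Γ -> Prop)
    (v : L -> Γ) (a : L) (d : cut Γ) (f : {poly L}) : int * Γ :=
  let g := f \Po ('X + a%:P) in
  epsilon (inhabits (0 : int * Γ)) (fun p =>
    (exists2 n : nat, (n < size g)%N /\ g`_n != 0 & p = (n%:Z, v g`_n)) /\
    (forall m : nat, (m < size g)%N -> g`_m != 0 ->
        cut_le le d p (m%:Z, v g`_m))).

Definition omegaB (L : fieldType) (Γ : zmodType) (le : Γ -> Γ -> Prop)
    (v : L -> Γ) (a : L) (d : cut Γ) : pvaluation L Γ :=
  @PVal L Γ (int * Γ)%type (cut_le le d)
    (fun c => (0%:Z, c)) (omega_fun le v a d).

(* Main.v *)
Require Import Defs.
From HB Require Import structures.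
From mathcomp Require Import all_boot all_order all_algebra.
From Stdlib Require Import Classical ClassicalEpsilon.
Import Order.TTheory GRing.Theory Num.Theory.
Local Open Scope ring_scope.

Set Implicit Arguments.
Unset Strict Implicit.
Unset Printing Implicit Defensive.

Section OAG.
Variables (G : zmodType) (le : G -> G -> Prop) (H : is_oag le).

Lemma o_refl x : le x x. Proof. by case: H => h _ _ _ _; apply: h. Qed.
Lemma o_anti x y : le x y -> le y x -> x = y. Proof. by case: H => _ h _ _ _; apply: h. Qed.
Lemma o_trans x y z : le x y -> le y z -> le x z. Proof. by case: H => _ _ h _ _; apply: h. Qed.
Lemma o_total x y : le x y \/ le y x. Proof. by case: H => _ _ _ h _; apply: h. Qed.
Lemma o_addr x y z : le x y -> le (x + z) (y + z). Proof. by case: H => _ _ _ _ h; apply: h. Qed.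
Lemma o_addl x y z : le x y -> le (z + x) (z + y).
Proof. by move=> h; rewrite ![z + _]addrC; apply: o_addr. Qed.
Lemma o_add a b c e : le a b -> le c e -> le (a + c) (b + e).
Proof. move=> h1 h2; apply: (o_trans (o_addr c h1)); exact: o_addl. Qed.
Lemma o_addrK x y z : le (x + z) (y + z) -> le x y.
Proof. by move=> h; have := o_addr (- z) h; rewrite !addrK. Qed.
Lemma o_opp x y : le x y -> le (- y) (- x).
Proof.
move=> h; have := o_addr (- x - y) h.
by rewrite addrA subrr add0r addrCA subrr addr0.
Qed.
Lemma o_sub0 x y : le x y <-> le (x - y) 0.
Proof.
split=> h; first by have := o_addr (- y) h; rewrite subrr.
by have := o_addr y h; rewrite subrK add0r.
Qed.
Lemma o_lt_le x y z : ltof le x y -> le y z -> ltof le x z.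
Proof.
move=> [h1 h2] h3; split; first exact: o_trans h3.
by move=> e; subst; apply: h2; apply: o_anti.
Qed.
Lemma o_le_lt x y z : le x y -> ltof le y z -> ltof le x z.
Proof.
move=> h1 [h2 h3]; split; first exact: o_trans h2.
by move=> e; subst; apply: h3; apply: o_anti.
Qed.
Lemma o_nle x y : ~ le x y -> ltof le y x.
Proof.
move=> h; split; first by case: (o_total x y).
by move=> e; subst; apply: h; apply: o_refl.
Qed.
Lemma o_ltNle x y : ltof le x y -> ~ le y x.
Proof. by move=> [h1 h2] h3; apply: h2; apply: o_anti. Qed.
Lemma o_ltD a b c e : ltof le a b -> le c e -> ltof le (a + c) (b + e).
Proof.
move=> [h1 h2] h3; split; first exact: o_add.
move=> E; apply: h2; apply: o_anti => //.
apply: (@o_addrK _ _ c); rewrite E; exact: o_addl.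
Qed.
Lemma o_muln x y n : le x y -> le (x *+ n) (y *+ n).
Proof.
move=> h; elim: n => [|n IH]; first by rewrite !mulr0n; apply: o_refl.
by rewrite !mulrS; apply: o_add.
Qed.
Lemma o_ltmuln x y n : ltof le x y -> (0 < n)%N -> ltof le (x *+ n) (y *+ n).
Proof.
move=> h; case: n => // n _; elim: n => [|n IH]; first by rewrite !mulr1n.
by rewrite mulrS [y *+ _]mulrS; apply: o_ltD => //; case: IH.
Qed.
Lemma o_torsion (x y : G) n : (0 < n)%N -> x *+ n = y *+ n -> x = y.
Proof.
move=> n0 E; case: (o_total x y) => h; apply: NNPP => ne.
  by have [_ ] := o_ltmuln (conj h ne) n0; apply.
by have [_ ] := o_ltmuln (conj h (fun e => ne (esym e))) n0; apply.
Qed.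
Lemma o_mulz x y k : 0 <= k -> le x y -> le (x *~ k) (y *~ k).
Proof. case: k => n k0 h; first by rewrite -!pmulrn; apply: o_muln.
by rewrite NegzE oppr_ge0 in k0. Qed.
Lemma o_mulzN x y k : k <= 0 -> le x y -> le (y *~ k) (x *~ k).
Proof.
move=> k0 h; have := @o_mulz x y (- k); rewrite oppr_ge0 !mulrNz => /(_ k0 h).
by move/o_opp; rewrite !opprK.
Qed.
Lemma o_ltmulz x y k : 0 < k -> ltof le x y -> ltof le (x *~ k) (y *~ k).
Proof. case: k => n k0 h; first by rewrite -!pmulrn; apply: o_ltmuln.
by rewrite NegzE oppr_gt0 in k0. Qed.
End OAG.
Section CutOrder.
Variables (Γ : zmodType) (le : Γ -> Γ -> Prop) (H : is_oag le) (d : cut Γ)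
  (Hd : is_cut le d).

Lemma cut_LR l r : cutL d l -> cutR d r -> ltof le l r.
Proof. by case: Hd => h _; apply: h. Qed.
Lemma cut_part g : cutL d g \/ cutR d g.
Proof. by case: Hd. Qed.
Lemma cut_disj g : cutL d g -> cutR d g -> False.
Proof. by move=> h1 h2; case: (cut_LR h1 h2). Qed.
Lemma cutL_down x y : cutL d y -> le x y -> cutL d x.
Proof.
move=> hy hxy; case: (cut_part x) => // hx.
by case: (o_ltNle H (cut_LR hy hx)).
Qed.
Lemma cutR_up x y : cutR d x -> le x y -> cutR d y.
Proof.
move=> hx hxy; case: (cut_part y) => // hy.
by case: (o_ltNle H (cut_LR hy hx)).
Qed.
Lemma cutL_notR g : cutL d g <-> ~ cutR d g.
Proof.
split; first by move=> h1 h2; apply: (cut_disj h1 h2).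
by move=> h; case: (cut_part g).
Qed.

Definition npos (k : int) (b : Γ) : Prop :=
  if k == 0 then le b 0
  else if 0 < k then exists r, cutR d r /\ le (r *~ k + b) 0
  else exists l, cutL d l /\ le b (l *~ (- k)).

Lemma cut_leE p q : cut_le le d p q = npos (p.1 - q.1) (p.2 - q.2).
Proof. by []. Qed.

Lemma npos0 b : npos 0 b <-> le b 0.
Proof. by rewrite /npos eqxx. Qed.
Lemma nposP k b : 0 < k ->
  (npos k b <-> exists r, cutR d r /\ le (r *~ k + b) 0).
Proof. by move=> k0; rewrite /npos gt_eqF // k0. Qed.
Lemma nposN k b : k < 0 ->
  (npos k b <-> exists l, cutL d l /\ le b (l *~ (- k))).
Proof. by move=> k0; rewrite /npos lt_eqF // lt_gtF. Qed.

Lemma le_sum0 a b : le (a + b) 0 <-> le b (- a).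
Proof.
split=> h.
  by have := o_addl H (- a) h; rewrite addKr addr0.
by have := o_addl H a h; rewrite subrr.
Qed.

Lemma npos_add0 b1 k2 b2 : le b1 0 -> npos k2 b2 -> npos k2 (b1 + b2).
Proof.
move=> h1; case: (ltrgtP k2 0) => [k2n|k2p|->].
- move/(nposN _ k2n) => [l [hl h2]]; apply/(nposN _ k2n); exists l; split => //.
  by rewrite -[_ *~ _]add0r; apply: (o_add H).
- move/(nposP _ k2p) => [r [hr h2]]; apply/(nposP _ k2p); exists r; split => //.
  by rewrite addrCA -[0]addr0; apply: (o_add H).
- by move/npos0 => h2; apply/npos0; rewrite -[0]addr0; apply: (o_add H).
Qed.

Lemma npos_add_pn k1 b1 k2 b2 : 0 < k1 -> k2 < 0 ->
  npos k1 b1 -> npos k2 b2 -> npos (k1 + k2) (b1 + b2).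
Proof.
move=> k1p k2n /(nposP _ k1p) [r [hr h1]] /(nposN _ k2n) [l [hl h2]].
have lr : le l r by case: (cut_LR hl hr).
move/le_sum0: h1 => h1.
case: (ltrgtP (k1 + k2) 0) => [kn|kp|k0].
- apply/(nposN _ kn); exists l; split => //.
  rewrite opprD mulrzDr; apply: (o_add H) => //.
  apply: (o_trans H h1); rewrite -mulrNz; apply: (o_mulzN H) => //.
  by rewrite oppr_le0 ltW.
- apply/(nposP _ kp); exists r; split => //.
  rewrite mulrzDr addrACA -[0]addr0; apply: (o_add H); first by apply/le_sum0.
  apply/le_sum0; apply: (o_trans H h2); rewrite -mulrNz; apply: (o_mulz H) => //.
  by rewrite oppr_ge0 ltW.
- rewrite k0; apply/npos0; have ek2 : k2 = - k1 by apply/eqP; rewrite -(eqr_opp k2) opprK eq_sym -subr_eq0 opprK k0.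
  rewrite ek2 opprK in h2.
  rewrite -(subrr (r *~ k1)) addrC; apply: (o_add H) => //.
  by apply: (o_trans H h2); apply: (o_mulz H) => //; rewrite ltW.
Qed.

Lemma npos_add_pp k1 b1 k2 b2 : 0 < k1 -> 0 < k2 ->
  npos k1 b1 -> npos k2 b2 -> npos (k1 + k2) (b1 + b2).
Proof.
move=> k1p k2p /(nposP _ k1p) [r1 [hr1 h1]] /(nposP _ k2p) [r2 [hr2 h2]].
have kp : 0 < k1 + k2 by rewrite addr_gt0.
apply/(nposP _ kp); case: (o_total H r1 r2) => h.
- exists r1; split => //; rewrite mulrzDr addrACA -[0]addr0; apply: (o_add H) => //.
  apply: (o_trans H _ h2); apply: (o_addr H); apply: (o_mulz H) => //; exact: ltW.
- exists r2; split => //; rewrite mulrzDr addrACA -[0]addr0; apply: (o_add H) => //.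
  apply: (o_trans H _ h1); apply: (o_addr H); apply: (o_mulz H) => //; exact: ltW.
Qed.

Lemma npos_add_nn k1 b1 k2 b2 : k1 < 0 -> k2 < 0 ->
  npos k1 b1 -> npos k2 b2 -> npos (k1 + k2) (b1 + b2).
Proof.
move=> k1n k2n /(nposN _ k1n) [l1 [hl1 h1]] /(nposN _ k2n) [l2 [hl2 h2]].
have kn : k1 + k2 < 0 by rewrite -oppr_gt0 opprD addr_gt0 // oppr_gt0.
apply/(nposN _ kn); rewrite opprD; case: (o_total H l1 l2) => h.
- exists l2; split => //; rewrite mulrzDr; apply: (o_add H) => //.
  apply: (o_trans H h1); apply: (o_mulz H) => //; rewrite oppr_ge0 ltW //.
- exists l1; split => //; rewrite mulrzDr; apply: (o_add H) => //.
  apply: (o_trans H h2); apply: (o_mulz H) => //; rewrite oppr_ge0 ltW //.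
Qed.

Lemma npos_add k1 b1 k2 b2 :
  npos k1 b1 -> npos k2 b2 -> npos (k1 + k2) (b1 + b2).
Proof.
case: (ltrgtP k1 0) => [k1n|k1p|->]; last first.
  by move/npos0 => h1 h2; rewrite add0r; apply: npos_add0.
all: case: (ltrgtP k2 0) => [k2n|k2p|->]; last first.
all: try by move=> h1 /npos0 h2; rewrite addr0 addrC; apply: npos_add0.
all: first [exact: npos_add_nn | exact: npos_add_pp | exact: npos_add_pn |
  by move=> h1 h2; rewrite addrC [b1 + _]addrC; apply: npos_add_pn].
Qed.

Lemma npos_anti k b : npos k b -> npos (- k) (- b) -> k = 0 /\ b = 0.
Proof.
case: (ltrgtP k 0) => [kn|kp|->].
- move/(nposN _ kn) => [l [hl h1]].
  have kp : 0 < - k by rewrite oppr_gt0.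
  move/(nposP _ kp) => [r [hr h2]]; exfalso.
  move/le_sum0/(o_opp H): h2; rewrite !opprK => h2.
  have := o_ltmulz H kp (cut_LR hl hr); move/(o_ltNle H); apply.
  exact: (o_trans H h2 h1).
- move/(nposP _ kp) => [r [hr h1]].
  have kn : - k < 0 by rewrite oppr_lt0.
  move/(nposN _ kn) => [l [hl h2]]; exfalso; rewrite opprK in h2.
  move/le_sum0: h1 => h1.
  have := o_ltmulz H kp (cut_LR hl hr); move/(o_ltNle H); apply.
  have := o_opp H h2; rewrite opprK => h3.
  by have := o_opp H (o_trans H h3 h1); rewrite !opprK.
- move/npos0 => h1; rewrite oppr0 => /npos0 h2; split => //.
  apply: (o_anti H h1); have := o_opp H h2; by rewrite opprK oppr0.
Qed.

Hypothesis Hdiv : forall (n : nat) (b : Γ), (0 < n)%N -> exists y, y *+ n = b.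

Lemma npos_total k b : npos k b \/ npos (- k) (- b).
Proof.
case: (ltrgtP k 0) => [kn|kp|->].
- have kp : 0 < - k by rewrite oppr_gt0.
  have [n En] : exists n : nat, - k = n%:Z.
    by case: (- k) kp => [n|n] //; exists n.
  have n0 : (0 < n)%N by rewrite -ltz_nat -En.
  have [y Ey] := Hdiv b n0.
  case: (cut_part y) => hy.
  + left; apply/(nposN _ kn); exists y; split => //.
    by rewrite En -pmulrn Ey; apply: (o_refl H).
  + right; apply/(nposP _ kp); exists y; split => //.
    by rewrite En -pmulrn Ey subrr; apply: (o_refl H).
- have [n En] : exists n : nat, k = n%:Z.
    by case: k kp => [n|n] //; exists n.
  have n0 : (0 < n)%N by rewrite -ltz_nat -En.
  have [y Ey] := Hdiv (- b) n0.
  have kn : - k < 0 by rewrite oppr_lt0.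
  case: (cut_part y) => hy.
  + right; apply/(nposN _ kn); exists y; split => //.
    by rewrite opprK En -pmulrn Ey; apply: (o_refl H).
  + left; apply/(nposP _ kp); exists y; split => //.
    by rewrite En -pmulrn Ey addNr; apply: (o_refl H).
- by case: (o_total H b 0) => h; [left|right]; apply/npos0;
    rewrite // -oppr0; apply: (o_opp H).
Qed.

Lemma subDD (V : zmodType) (a b c : V) : (a + c) - (b + c) = a - b.
Proof. by rewrite opprD addrACA subrr addr0. Qed.

Lemma cut_oag : is_oag (cut_le le d).
Proof.
split.
- by move=> x; rewrite cut_leE !subrr; apply/npos0; apply: (o_refl H).
- move=> x y; rewrite !cut_leE => h1 h2.
  have h2' : npos (- (x.1 - y.1)) (- (x.2 - y.2)) by rewrite !opprB.
  have [e1 e2] := npos_anti h1 h2'.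
  by case: x y e1 e2 {h1 h2 h2'} => [x1 x2] [y1 y2] /= /eqP; rewrite subr_eq0 => /eqP -> /eqP;
    rewrite subr_eq0 => /eqP ->.
- move=> x y z; rewrite !cut_leE => h1 h2; have := npos_add h1 h2.
  by rewrite !addrA !subrK.
- move=> x y; rewrite !cut_leE; case: (npos_total (x.1 - y.1) (x.2 - y.2)); first by left.
  by rewrite !opprB; right.
- move=> x y z; rewrite !cut_leE /=.
  by rewrite !subDD.
Qed.

Lemma cut_le00 x y : cut_le le d (0, x) (0, y) <-> le x y.
Proof.
rewrite cut_leE /= subrr npos0; split => h.
  exact: (iffRL (o_sub0 H x y)).
exact: (iffLR (o_sub0 H x y)).
Qed.

Lemma cut_le_same (k : int) x y : cut_le le d (k, x) (k, y) <-> le x y.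
Proof.
rewrite cut_leE /= subrr npos0; split => h.
  exact: (iffRL (o_sub0 H x y)).
exact: (iffLR (o_sub0 H x y)).
Qed.

Lemma cut_le10 g : cut_le le d (1, 0) (0, g) <-> cutR d g.
Proof.
rewrite cut_leE /= subr0 sub0r nposP // ; split.
  move=> [r [hr h]]; apply: (cutR_up hr); move/le_sum0/(o_opp H): h.
  by rewrite !opprK.
by move=> hg; exists g; split => //; rewrite subrr; apply: (o_refl H).
Qed.

Lemma cut_le01 g : cut_le le d (0, g) (1, 0) <-> cutL d g.
Proof.
rewrite cut_leE /= sub0r subr0 nposN // opprK; split.
  by move=> [l [hl h]]; apply: (cutL_down hl).
by move=> hg; exists g; split => //; apply: (o_refl H).
Qed.

End CutOrder.

Lemma ultra_strict (V G : zmodType) (le : G -> G -> Prop) (H : is_oag le)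
  (phi : V -> G) (hN : forall x, x != 0 -> phi (- x) = phi x)
  (hU : forall x y, x != 0 -> y != 0 -> x + y != 0 ->
     le (phi x) (phi (x + y)) \/ le (phi y) (phi (x + y)))
  x y : x != 0 -> y != 0 -> ltof le (phi x) (phi y) ->
  x + y != 0 /\ phi (x + y) = phi x.
Proof.
move=> x0 y0 lxy.
have xy0 : x + y != 0.
  apply/negP => /eqP e; have ey : y = - x by rewrite -(addKr x y) e addr0.
  by case: lxy => _; rewrite ey hN.
split => //.
have h1 : le (phi x) (phi (x + y)).
  case: (hU x y x0 y0 xy0) => // h.
  by apply: (o_trans H _ h); case: lxy.
apply: (o_anti H _ h1).
have ny0 : - y != 0 by rewrite oppr_eq0.
have := hU (x + y) (- y) xy0 ny0; rewrite addrK => /(_ x0) [] // h.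
by rewrite hN // in h; case: (o_ltNle H lxy).
Qed.

Section Val.
Variables (L : fieldType) (Γ : zmodType) (le : Γ -> Γ -> Prop) (v : L -> Γ)
  (hv : is_valuation le v).

Lemma v_oag : is_oag le. Proof. by case: hv. Qed.
Lemma v_mul x y : x != 0 -> y != 0 -> v (x * y) = v x + v y.
Proof. by case: hv => _ h _ _; apply: h. Qed.
Lemma v_ultra x y : x != 0 -> y != 0 -> x + y != 0 ->
  le (v x) (v (x + y)) \/ le (v y) (v (x + y)).
Proof. by case: hv => _ _ h _; apply: h. Qed.
Lemma v_surj g : exists x, x != 0 /\ v x = g.
Proof. by case: hv => _ _ _ h; apply: h. Qed.

Lemma v1 : v 1 = 0.
Proof.
have := v_mul (oner_neq0 L) (oner_neq0 L); rewrite mulr1 => e.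
by apply: (@addrI _ (v 1)); rewrite addr0 -e.
Qed.

Lemma vN1 : v (-1) = 0.
Proof.
have n1 : (-1 : L) != 0 by rewrite oppr_eq0 oner_neq0.
have := v_mul n1 n1; rewrite mulrNN mulr1 v1 => e.
apply: (@o_torsion _ _ v_oag _ _ 2) => //.
by rewrite mulr2n -e mul0rn.
Qed.

Lemma vN x : x != 0 -> v (- x) = v x.
Proof.
move=> x0; have n1 : (-1 : L) != 0 by rewrite oppr_eq0 oner_neq0.
by rewrite -mulN1r v_mul // vN1 add0r.
Qed.

Lemma vX x n : x != 0 -> v (x ^+ n) = v x *+ n.
Proof.
move=> x0; elim: n => [|n IH]; first by rewrite expr0 v1 mulr0n.
by rewrite exprS v_mul ?expf_neq0 // IH mulrS.
Qed.

Lemma v_strict x y : x != 0 -> y != 0 -> ltof le (v x) (v y) ->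
  x + y != 0 /\ v (x + y) = v x.
Proof. exact: (ultra_strict v_oag vN v_ultra). Qed.

Lemma sum_ultra (I : Type) (s : seq I) (P : pred I) (F : I -> L) :
  \sum_(i <- s | P i) F i != 0 ->
  exists i, [/\ P i, F i != 0 & le (v (F i)) (v (\sum_(i <- s | P i) F i))].
Proof.
elim: s => [|i s IH]; first by rewrite big_nil eqxx.
rewrite big_cons; case: ifP => Pi; last exact: IH.
set S := \sum_(j <- s | P j) F j.
have [Fi0|Fi0] := eqVneq (F i) 0.
  by rewrite Fi0 add0r => /IH.
have [S0|S0] := eqVneq S 0.
  by rewrite S0 addr0 => _; exists i; split => //; apply: (o_refl v_oag).
move=> iS0; case: (v_ultra Fi0 S0 iS0) => h.
  by exists i.
have [j [Pj Fj hj]] := IH S0; exists j; split => //.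
exact: (o_trans v_oag hj h).
Qed.

Lemma sum_strict (n : nat) (F : 'I_n -> L) (i0 : 'I_n) : F i0 != 0 ->
  (forall j, j != i0 -> F j != 0 -> ltof le (v (F i0)) (v (F j))) ->
  \sum_j F j != 0 /\ v (\sum_j F j) = v (F i0).
Proof.
move=> F0 hF; rewrite (bigD1 i0) //=.
set S := \sum_(j | j != i0) F j.
have [S0|S0] := eqVneq S 0; first by rewrite S0 addr0.
have [j [Pj Fj hj]] := sum_ultra S0.
apply: v_strict => //.
exact: (o_lt_le v_oag (hF j Pj Fj) hj).
Qed.

End Val.

Lemma v_div (L : closedFieldType) (Γ : zmodType) (le : Γ -> Γ -> Prop) (v : L -> Γ)
  (hv : is_valuation le v) (n : nat) (b : Γ) : (0 < n)%N -> exists y, y *+ n = b.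
Proof.
move=> n0; have [x [x0 <-]] := v_surj hv b.
have : size ('X^n - x%:P) != 1 by rewrite size_XnsubC // eqSS -lt0n.
move/closed_rootP => [y]; rewrite rootE !hornerE subr_eq0 => /eqP ey.
have y0 : y != 0.
  by apply/negP => /eqP y0; move: ey; rewrite y0 expr0n eqn0Ngt n0 => e; move: x0; rewrite -e eqxx.
by exists (v y); rewrite -(vX hv _ y0) ey.
Qed.

Lemma coef_size (R : nzRingType) (g : {poly R}) n : g`_n != 0 -> (n < size g)%N.
Proof. by rewrite ltnNge; apply: contra => h; rewrite nth_default. Qed.

Lemma XaddC_size (R : nzRingType) (a : R) : leq 2 (size ('X + a%:P : {poly R})).
Proof. by rewrite size_XaddC. Qed.

Section Omega.
Variables (L : fieldType) (Γ : zmodType) (le : Γ -> Γ -> Prop) (v : L -> Γ)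
  (hv : is_valuation le v) (a : L) (d : cut Γ) (Hd : is_cut le d)
  (Hdiv : forall (n : nat) (b : Γ), (0 < n)%N -> exists y, y *+ n = b).

Let H := v_oag hv.
Let O : is_oag (cut_le le d) := cut_oag H Hd Hdiv.
Let cle := cut_le le d.

Definition ospec (g : {poly L}) (p : int * Γ) : Prop :=
    (exists2 n : nat, (n < size g)%N /\ g`_n != 0 & p = (n%:Z, v g`_n)) /\
    (forall m : nat, (m < size g)%N -> g`_m != 0 ->
        cut_le le d p (m%:Z, v g`_m)).

Definition Fp (f : {poly L}) := f \Po ('X + a%:P).

Lemma Fp_neq0 f : f != 0 -> Fp f != 0.
Proof. by rewrite /Fp comp_poly_eq0 // XaddC_size. Qed.

Lemma omega_funE f :
  omega_fun le v a d f = epsilon (inhabits (0 : int * Γ)) (ospec (Fp f)).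
Proof. by []. Qed.

Lemma ospec_ex g : g != 0 -> exists p, ospec g p.
Proof.
move=> g0.
suff aux : forall N, (exists n, (n < N)%N /\ g`_n != 0) ->
  exists n0, [/\ (n0 < N)%N, g`_n0 != 0 &
    forall m, (m < N)%N -> g`_m != 0 -> cle (n0%:Z, v g`_n0) (m%:Z, v g`_m)].
  have : exists n, (n < size g)%N /\ g`_n != 0.
    exists (size g).-1; rewrite prednK ?size_poly_gt0 // leqnn; split => //.
    by rewrite -lead_coefE lead_coef_eq0.
  move/aux => [n0 [h1 h2 h3]]; exists (n0%:Z, v g`_n0); split.
    by exists n0.
  by move=> m hm gm; apply: h3.
elim => [[n [//]]|N IH] hex.
have [[n [hn gn]]|nex] := classic (exists n, (n < N)%N /\ g`_n != 0).
  have [n0 [h1 h2 h3]] := IH (ex_intro _ n (conj hn gn)).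
  have [gN|gN] := eqVneq g`_N 0.
    exists n0; split => //; first exact: ltnW.
    move=> m; rewrite ltnS leq_eqVlt => /orP [/eqP ->|hm]; first by rewrite gN eqxx.
    exact: h3.
  case: (o_total O (n0%:Z, v g`_n0) (N%:Z, v g`_N)) => hc.
    exists n0; split => //; first exact: ltnW.
    move=> m; rewrite ltnS leq_eqVlt => /orP [/eqP ->|hm] //.
    exact: h3.
  exists N; split => //.
  move=> m; rewrite ltnS leq_eqVlt => /orP [/eqP ->|hm] gm.
    exact: (o_refl O).
  exact: (o_trans O hc (h3 m hm gm)).
have [n [hn gn]] := hex.
have eN : n = N.
  move: hn; rewrite ltnS leq_eqVlt => /orP [/eqP //|hn].
  by case: nex; exists n.
subst n; exists N; split => //.
move=> m; rewrite ltnS leq_eqVlt => /orP [/eqP ->|hm] gm.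
  exact: (o_refl O).
by case: nex; exists m.
Qed.

Lemma ospec_uniq g p q : ospec g p -> ospec g q -> p = q.
Proof.
move=> [[n [hn gn] ->] hp] [[m [hm gm] ->] hq].
apply: (o_anti O); [exact: hp | exact: hq].
Qed.

Lemma omega_spec f : f != 0 -> ospec (Fp f) (omega_fun le v a d f).
Proof.
move=> f0; rewrite omega_funE; apply: epsilon_spec.
exact: ospec_ex (Fp_neq0 f0).
Qed.

Lemma omega_eq f p : f != 0 -> ospec (Fp f) p -> omega_fun le v a d f = p.
Proof. by move=> f0 hp; apply: (ospec_uniq (omega_spec f0) hp). Qed.

Lemma omega_le f m : f != 0 -> (Fp f)`_m != 0 ->
  cle (omega_fun le v a d f) (m%:Z, v (Fp f)`_m).
Proof.
move=> f0 hm; have [_ h] := omega_spec f0; apply: h => //.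
exact: coef_size.
Qed.

Lemma omega_C c : c != 0 -> omega_fun le v a d c%:P = (0, v c).
Proof.
move=> c0; apply: omega_eq; first by rewrite polyC_eq0.
rewrite /Fp comp_polyC; split.
  by exists 0%N; rewrite ?coefC //= size_polyC c0.
move=> m; rewrite size_polyC c0 ltnS leqn0 => /eqP -> _.
rewrite coefC /=; exact: (o_refl O).
Qed.

Lemma pairD (x1 y1 : int) (x2 y2 : Γ) : (x1, x2) + (y1, y2) = (x1 + y1, x2 + y2).
Proof. by []. Qed.

Lemma omega_mul f h : f != 0 -> h != 0 ->
  omega_fun le v a d (f * h) = omega_fun le v a d f + omega_fun le v a d h.
Proof.
move=> f0 h0.
have fh0 : f * h != 0 by rewrite mulf_neq0.
have [[i0 [hi0 Fi0] Ep] hp] := omega_spec f0.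
have [[j0 [hj0 Gj0] Eq] hq] := omega_spec h0.
apply: omega_eq => //.
have EF : Fp (f * h) = Fp f * Fp h by rewrite /Fp comp_polyM.
rewrite EF Ep Eq; rewrite Ep in hp; rewrite Eq in hq.
move: (Fp f) (Fp h) hi0 Fi0 hp hj0 Gj0 hq => F G hi0 Fi0 hp hj0 Gj0 hq.
pose n := (i0 + j0)%N.
have E1 : (i0%:Z, v F`_i0) + (j0%:Z, v G`_j0) = (n%:Z, v (F`_i0 * G`_j0)).
  by rewrite pairD (v_mul hv) // PoszD.
have key : forall j : nat, (j <= n)%N -> j != i0 -> F`_j != 0 ->
    G`_(n - j) != 0 -> ltof le (v (F`_i0 * G`_j0)) (v (F`_j * G`_(n - j))).
  move=> j jn ji Fj Gj.
  have l1 : ltof cle (i0%:Z, v F`_i0) (j%:Z, v F`_j).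
    split; first by apply: hp => //; exact: coef_size.
    by case => e _; move: ji; rewrite e eqxx.
  have l2 : cle (j0%:Z, v G`_j0) ((n - j)%:Z, v G`_(n - j)).
    by apply: hq => //; exact: coef_size.
  have E2 : (j%:Z, v F`_j) + ((n - j)%:Z, v G`_(n - j)) =
            (n%:Z, v (F`_j * G`_(n - j))).
    by rewrite pairD (v_mul hv) // -PoszD subnKC.
  have := o_ltD O l1 l2; rewrite E1 E2 => [[l3 ne]]; split.
    by apply/(cut_le_same H d n).
  by move=> e; apply: ne; rewrite e.
have i0n : (i0 < n.+1)%N by rewrite ltnS leq_addr.
have nj0 : (n - i0)%N = j0 by rewrite /n addKn.
have nz0 : (fun j : 'I_n.+1 => F`_j * G`_(n - j)) (Ordinal i0n) != 0.
  by rewrite /= nj0 mulf_neq0.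
have hk : forall j : 'I_n.+1, j != Ordinal i0n ->
    (fun j : 'I_n.+1 => F`_j * G`_(n - j)) j != 0 ->
    ltof le (v ((fun j : 'I_n.+1 => F`_j * G`_(n - j)) (Ordinal i0n)))
            (v ((fun j : 'I_n.+1 => F`_j * G`_(n - j)) j)).
  move=> j jne; rewrite /= nj0 mulf_eq0 negb_or => /andP [Fj Gj].
  by apply: key => //; rewrite -ltnS ltn_ord.
have [C0 vC] := sum_strict hv nz0 hk.
split.
  exists n; last by rewrite coefM vC /= nj0 -E1.
  by split; [apply: coef_size|]; rewrite coefM.
move=> m _; rewrite coefM => Cm.
have [j [_ tj hj]] := sum_ultra hv Cm.
move: tj; rewrite mulf_eq0 negb_or => /andP [Fj Gj].
have l1 : cle (i0%:Z, v F`_i0) (j%:Z, v F`_j).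
  by apply: hp => //; exact: coef_size.
have l2 : cle (j0%:Z, v G`_j0) ((m - j)%:Z, v G`_(m - j)).
  by apply: hq => //; exact: coef_size.
have jm : (j <= m)%N by rewrite -ltnS ltn_ord.
have := o_add O l1 l2; rewrite (pairD j%:Z) -(v_mul hv) // -PoszD subnKC // => l3.
apply: (o_trans O l3); exact/(cut_le_same H d m).
Qed.

Lemma omega_add f h : f != 0 -> h != 0 -> f + h != 0 ->
  cle (omega_fun le v a d f) (omega_fun le v a d (f + h)) \/
  cle (omega_fun le v a d h) (omega_fun le v a d (f + h)).
Proof.
move=> f0 h0 fh0.
have [[n [_ Cn] E] _] := omega_spec fh0.
rewrite E; rewrite /Fp comp_polyD coefD in Cn *.
have hf := @omega_le f n f0; have hg := @omega_le h n h0.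
rewrite /Fp in hf hg.
move: (f \Po _) (h \Po _) Cn hf hg => F G Cn hf hg.
have [F0|F0] := eqVneq F`_n 0.
  by right; rewrite F0 add0r; apply: hg; rewrite F0 add0r in Cn.
have [G0|G0] := eqVneq G`_n 0.
  by left; rewrite G0 addr0; apply: hf.
case: (v_ultra hv F0 G0 Cn) => h1; [left; apply: (o_trans O (hf F0)) |
  right; apply: (o_trans O (hg G0))]; exact/(cut_le_same H d n).
Qed.

Lemma Fp_lin c : Fp ('X - c%:P) = 'X + (a - c)%:P.
Proof. by rewrite /Fp comp_polyB comp_polyX comp_polyC polyCB addrA. Qed.

Lemma coef_lin (e : L) m : ('X + e%:P)`_m = (m == 1)%:R + (if m == 0 then e else 0).
Proof. by rewrite coefD coefX coefC. Qed.

Lemma omega_lin_a : omega_fun le v a d ('X - a%:P) = (1, 0).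
Proof.
apply: omega_eq; first by rewrite polyXsubC_eq0.
rewrite Fp_lin subrr; split.
  exists 1%N; first by rewrite size_XaddC coef_lin /= addr0 oner_neq0.
  by rewrite coef_lin /= addr0 (v1 hv).
move=> m; rewrite size_XaddC coef_lin; case: m => [|[|m]] //=.
  by rewrite addr0 eqxx.
by rewrite addr0 (v1 hv) => _ _; apply: (o_refl O).
Qed.

Lemma ball_R c : c != a -> (ball le v a d c <-> cutR d (v (c - a))).
Proof.
move=> ca; split.
  case=> [e|h]; first by move: ca; rewrite e eqxx.
  case: (cut_part Hd (v (c - a))) => // hl.
  by case: (h _ hl).
by move=> hr; right => l hl; apply: (cut_LR Hd hl hr).
Qed.

Lemma omega_lin_ball c : ball le v a d c ->
  omega_fun le v a d ('X - c%:P) = (1, 0).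
Proof.
have [->|ca] := eqVneq c a; first by move=> _; exact: omega_lin_a.
move/(ball_R ca) => hr.
have ac0 : a - c != 0 by rewrite subr_eq0 eq_sym.
apply: omega_eq; first by rewrite polyXsubC_eq0.
rewrite Fp_lin; split.
  exists 1%N; first by rewrite size_XaddC coef_lin /= addr0 oner_neq0.
  by rewrite coef_lin /= addr0 (v1 hv).
move=> m; rewrite size_XaddC coef_lin; case: m => [|[|m]] //=.
  rewrite add0r => _ _; apply/(cut_le10 H Hd).
  by rewrite -opprB (vN hv) // subr_eq0.
by rewrite addr0 (v1 hv) => _ _; apply: (o_refl O).
Qed.

Lemma omega_lin_nball c : ~ ball le v a d c ->
  omega_fun le v a d ('X - c%:P) = (0, v (c - a)).
Proof.
move=> nb; have ca : c != a by apply/eqP => e; apply: nb; left.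
have hl : cutL d (v (c - a)).
  case: (cut_part Hd (v (c - a))) => // hr; by case: nb; apply/(ball_R ca).
have ac0 : a - c != 0 by rewrite subr_eq0 eq_sym.
apply: omega_eq; first by rewrite polyXsubC_eq0.
rewrite Fp_lin; split.
  exists 0%N; first by rewrite size_XaddC coef_lin /= add0r.
  by rewrite coef_lin /= add0r -opprB (vN hv) // subr_eq0.
move=> m; rewrite size_XaddC coef_lin; case: m => [|[|m]] //=.
  rewrite add0r -opprB (vN hv) ?subr_eq0 // => _ _; apply: (o_refl O).
by rewrite addr0 (v1 hv) => _ _; apply/(cut_le01 H Hd).
Qed.

End Omega.

Lemma poly_ind_lin (L : closedFieldType) (P : {poly L} -> Prop) :
  (forall c, c != 0 -> P c%:P) -> (forall c, P ('X - c%:P)) ->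
  (forall f g, f != 0 -> g != 0 -> P f -> P g -> P (f * g)) ->
  forall f, f != 0 -> P f.
Proof.
move=> hC hX hM f f0; have [r Er] := closed_field_poly_normal f.
have lc0 : lead_coef f != 0 by rewrite lead_coef_eq0.
suff [hp hp0] : P (\prod_(z <- r) ('X - z%:P)) /\ \prod_(z <- r) ('X - z%:P) != 0.
  by rewrite Er -mul_polyC; apply: hM => //; [rewrite polyC_eq0 | apply: hC].
elim: r {Er} => [|z r [IH IH0]].
  by rewrite big_nil -polyC1; split; [apply: hC; apply: oner_neq0 | rewrite polyC_eq0 oner_neq0].
rewrite big_cons; split.
  by apply: hM => //; rewrite polyXsubC_eq0.
by rewrite mulf_neq0 // polyXsubC_eq0.
Qed.

Section Main.
Variables (L : closedFieldType) (Γ : zmodType) (le : Γ -> Γ -> Prop) (v : L -> Γ)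
  (hv : is_valuation le v).

Let H := v_oag hv.
Let Hdiv := v_div hv.

Notation om a d := (omega_fun le v a d).

Lemma part1 a d : is_cut le d ->
  is_ext_val le v (omegaB le v a d) /\ value_transcendental (omegaB le v a d).
Proof.
move=> Hd; have O := cut_oag H Hd Hdiv.
split.
  split => //=; split.
  - by move=> x y; rewrite pairD addr0.
  - by move=> x y; apply: cut_le00.
  - by move=> c c0; apply: omega_C.
  - by move=> f g f0 g0; apply: omega_mul.
  - by move=> f g f0 g0 fg0; apply: omega_add.
exists (1, 0); split.
  exists ('X - a%:P), 1; split; rewrite ?polyXsubC_eq0 ?oner_neq0 //=.
  by rewrite omega_lin_a // -polyC1 omega_C ?oner_neq0 // (v1 hv) subr0.
move=> n n0 c /(congr1 fst) /=.
suff -> : ((1, 0) *+ n : int * Γ).1 = n%:Z by move/eqP; rewrite eqz_nat; case: n n0.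
by elim: n {n0} => // n IH; rewrite mulrS /= IH -addn1 PoszD addrC.
Qed.

Lemma vsub_sym x y : v (x - y) = v (y - x).
Proof.
have [xy|xy] := eqVneq (y - x) 0; first by rewrite -opprB xy oppr0.
by rewrite -opprB (vN hv).
Qed.

Lemma addKsub (x b : L) : b + x - b = x.
Proof. by rewrite [b + x]addrC addrK. Qed.

Lemma ball_sub_char a d b e : is_cut le d -> is_cut le e ->
  (forall c, ball le v b e c -> ball le v a d c) ->
  ball le v a d b /\ (forall g, cutR e g -> cutR d g).
Proof.
move=> Hd He hs; split; first by apply: hs; left.
move=> g hg; have [x [x0 vx]] := v_surj hv g.
have cb : b + x != b by rewrite -subr_eq0 addKsub.
have hc : ball le v a d (b + x).
  by apply: hs; apply/(ball_R v He cb); rewrite addKsub vx.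
case: (cut_part Hd g) => // hl; exfalso.
have [ba|ba] := eqVneq b a.
  subst b; move/(ball_R v Hd cb): hc; rewrite addKsub vx => hr.
  exact: (cut_disj Hd hl hr).
have hb : cutR d (v (b - a)) by apply/(ball_R v Hd ba); apply: hs; left.
have ba0 : b - a != 0 by rewrite subr_eq0.
have lt : ltof le (v x) (v (b - a)) by rewrite vx; apply: (cut_LR Hd hl hb).
have [s0 vs] := v_strict hv x0 ba0 lt.
have E : b + x - a = x + (b - a) by rewrite addrA [x + b]addrC.
have ca : b + x != a by rewrite -subr_eq0 E.
move/(ball_R v Hd ca): hc; rewrite E vs vx => hr; exact: (cut_disj Hd hl hr).
Qed.

Lemma ball_sub_of a d b e : is_cut le d -> is_cut le e ->
  ball le v a d b -> (forall g, cutR e g -> cutR d g) ->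
  forall c, ball le v b e c -> ball le v a d c.
Proof.
move=> Hd He hb hR c hc.
have [cb|cb] := eqVneq c b; first by rewrite cb.
have hce : cutR e (v (c - b)) by apply/(ball_R v He cb).
have [ca|ca] := eqVneq c a; first by left.
apply/(ball_R v Hd ca).
have [ba|ba] := eqVneq b a; first by rewrite -ba; apply: hR.
have hbr : cutR d (v (b - a)) by apply/(ball_R v Hd ba).
have E : c - a = (c - b) + (b - a) by rewrite addrA subrK.
have c0 : c - b != 0 by rewrite subr_eq0.
have b0 : b - a != 0 by rewrite subr_eq0.
have s0 : (c - b) + (b - a) != 0 by rewrite -E subr_eq0.
rewrite E; case: (v_ultra hv c0 b0 s0) => h.
  exact: (cutR_up H Hd (hR _ hce) h).
exact: (cutR_up H Hd hbr h).
Qed.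

Lemma cut_le_ext d e : (forall g, cutR d g <-> cutR e g) ->
  (forall g, cutL d g <-> cutL e g) ->
  forall p q, cut_le le d p q <-> cut_le le e p q.
Proof.
move=> hR hL p q; rewrite !cut_leE /npos; case: ifP => _ //; case: ifP => _;
  split; move=> [r [h1 h2]]; exists r; split => //; by apply/hR || apply/hL.
Qed.

Lemma om_eq_ball a d b e : is_cut le d -> is_cut le e ->
  (forall c, ball le v a d c <-> ball le v b e c) ->
  forall f, f != 0 -> om a d f = om b e f.
Proof.
move=> Hd He hbe; apply: poly_ind_lin.
- by move=> c c0; rewrite !(omega_C hv _ _ Hdiv).
- move=> c; case: (classic (ball le v a d c)) => hc.
    rewrite (omega_lin_ball hv Hd Hdiv hc) (omega_lin_ball hv He Hdiv) //.
    exact/hbe.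
  have hc' : ~ ball le v b e c by move/hbe.
  rewrite (omega_lin_nball hv Hd Hdiv hc) (omega_lin_nball hv He Hdiv hc').
  congr pair.
  have ca : c != a by apply/eqP => e0; apply: hc; left.
  have hab : ball le v a d b by apply/hbe; left.
  have hl : cutL d (v (c - a)).
    case: (cut_part Hd (v (c - a))) => // hr; by case: hc; apply/(ball_R v Hd ca).
  have [ba|ba] := eqVneq b a; first by rewrite ba.
  have hb : cutR d (v (b - a)) by apply/(ball_R v Hd ba).
  have c0 : c - a != 0 by rewrite subr_eq0.
  have ab0 : a - b != 0 by rewrite subr_eq0 eq_sym.
  have lt : ltof le (v (c - a)) (v (a - b)).
    by rewrite (vsub_sym a b); apply: (cut_LR Hd hl hb).
  have [_ vs] := v_strict hv c0 ab0 lt.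
  by rewrite -vs addrA subrK.
- by move=> f g f0 g0 e1 e2; rewrite !(omega_mul hv _ _ Hdiv) // e1 e2.
Qed.

Lemma part2 a b d e : is_cut le d -> is_cut le e ->
  (forall c, ball le v a d c <-> ball le v b e c) ->
  val_equiv (omegaB le v a d) (omegaB le v b e).
Proof.
move=> Hd He hbe.
have Eom := om_eq_ball Hd He hbe.
have [_ hR1] := ball_sub_char Hd He (fun c => iffRL (hbe c)).
have [_ hR2] := ball_sub_char He Hd (fun c => iffLR (hbe c)).
have hR : forall g, cutR d g <-> cutR e g by move=> g; split; [apply: hR2|apply: hR1].
have hL : forall g, cutL d g <-> cutL e g.
  move=> g; rewrite (cutL_notR Hd) (cutL_notR He); split => h1 h2; apply: h1; exact/hR.
exists id; split => //=.
- by move=> x [f [h [f0 h0 ->]]]; exists f, h; split => //; rewrite /= !Eom.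
- by move=> x y _ _; apply: cut_le_ext.
- move=> x [f [h [f0 h0 ->]]]; exists (om a d f - om a d h) => /=; last by rewrite !Eom.
  by exists f, h.
- by move=> f f0; rewrite Eom.
Qed.

Lemma om1 a d : is_cut le d -> om a d 1 = 0.
Proof. by move=> Hd; rewrite -polyC1 (omega_C hv _ Hd Hdiv) ?oner_neq0 // (v1 hv). Qed.

Lemma vg_om a d f : is_cut le d -> f != 0 -> in_vgroup (omegaB le v a d) (om a d f).
Proof.
by move=> Hd f0; exists f, 1; split; rewrite ?oner_neq0 //= (om1 _ Hd) subr0.
Qed.

Lemma vg_const a d g : is_cut le d -> in_vgroup (omegaB le v a d) (0, g).
Proof.
move=> Hd; have [x [x0 vx]] := v_surj hv g.
have := vg_om a Hd (f := x%:P); rewrite polyC_eq0 => /(_ x0).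
by rewrite (omega_C hv _ Hd Hdiv) // vx.
Qed.

Lemma part3 a b d e : is_cut le d -> is_cut le e ->
  val_equiv (omegaB le v a d) (omegaB le v b e) ->
  forall c, ball le v a d c <-> ball le v b e c.
Proof.
move=> Hd He [iota [h1 h2 h3 h4 h5]].
have Od := cut_oag H Hd Hdiv; have Oe := cut_oag H He Hdiv.
have hconst : forall g, iota (0, g) = (0, g).
  move=> g; have [x [x0 vx]] := v_surj hv g.
  have := h5 x%:P; rewrite polyC_eq0 => /(_ x0) /=.
  by rewrite !(omega_C hv _ _ Hdiv) // vx => E; rewrite -E.
have inj : forall p q, in_vgroup (omegaB le v a d) p ->
    in_vgroup (omegaB le v a d) q -> iota p = iota q -> p = q.
  move=> p q hp hq E; apply: (o_anti Od).
    by apply/(h3 p q hp hq) => /=; rewrite E; apply: (o_refl Oe).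
  by apply/(h3 q p hq hp) => /=; rewrite E; apply: (o_refl Oe).
have X0 : forall c : L, 'X - c%:P != 0 by move=> c; rewrite polyXsubC_eq0.
move=> c; split => hc; apply: NNPP => hn.
- have E := h5 ('X - c%:P) (X0 c); move: E => /=.
  rewrite (omega_lin_ball hv Hd Hdiv hc) (omega_lin_nball hv He Hdiv hn) -hconst => E.
  have hv1 := vg_om a Hd (X0 c); rewrite (omega_lin_ball hv Hd Hdiv hc) in hv1.
  by have := inj _ _ (vg_const a (v (c - b)) Hd) hv1 E; move/(congr1 fst).
- have E := h5 ('X - c%:P) (X0 c); move: E => /=.
  rewrite (omega_lin_ball hv He Hdiv hc) (omega_lin_nball hv Hd Hdiv hn) hconst.
  by move/(congr1 fst).
Qed.

End Main.

Section Surj.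
Variables (L : closedFieldType) (Γ : zmodType) (le : Γ -> Γ -> Prop) (v : L -> Γ)
  (hv : is_valuation le v) (w : pvaluation L Γ) (hw : is_ext_val le v w)
  (hvt : value_transcendental w).

Let H := v_oag hv.
Let Hdiv := v_div hv.
Let lew := @pv_le L Γ w.
Let emb := @pv_emb L Γ w.
Let wf := @pv_fun L Γ w.

Lemma Ow : is_oag lew. Proof. by case: hw. Qed.
Lemma emb_add x y : emb (x + y) = emb x + emb y. Proof. by case: hw => _ [h _ _ _ _]; apply: h. Qed.
Lemma emb_le x y : lew (emb x) (emb y) <-> le x y. Proof. by case: hw => _ [_ h _ _ _]; apply: h. Qed.
Lemma wC c : c != 0 -> wf c%:P = emb (v c). Proof. by case: hw => _ [_ _ h _ _]; apply: h. Qed.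
Lemma wmul f g : f != 0 -> g != 0 -> wf (f * g) = wf f + wf g.
Proof. by case: hw => _ [_ _ _ h _]; apply: h. Qed.
Lemma wult f g : f != 0 -> g != 0 -> f + g != 0 ->
  lew (wf f) (wf (f + g)) \/ lew (wf g) (wf (f + g)).
Proof. by case: hw => _ [_ _ _ _ h]; apply: h. Qed.

Lemma emb0 : emb 0 = 0.
Proof. by apply: (@addrI _ (emb 0)); rewrite -emb_add !addr0. Qed.
Lemma embN x : emb (- x) = - emb x.
Proof. by apply: (@addrI _ (emb x)); rewrite -emb_add !subrr emb0. Qed.
Lemma embMn x n : emb (x *+ n) = emb x *+ n.
Proof. by elim: n => [|n IH]; rewrite ?mulr0n ?emb0 // !mulrS emb_add IH. Qed.
Lemma embMz x k : emb (x *~ k) = emb x *~ k.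
Proof.
case: k => n; first by rewrite -!pmulrn embMn.
by rewrite NegzE !mulrNz embN -!pmulrn embMn.
Qed.
Lemma emb_inj x y : emb x = emb y -> x = y.
Proof.
move=> E; apply: (o_anti H); apply/emb_le; rewrite E; exact: (o_refl Ow).
Qed.

Lemma wN f : f != 0 -> wf (- f) = wf f.
Proof.
move=> f0; have n1 : (-1 : L) != 0 by rewrite oppr_eq0 oner_neq0.
have n1P : (-1 : L)%:P != 0 by rewrite polyC_eq0.
by rewrite -mulN1r -polyC1 -polyCN wmul // wC // (vN1 hv) emb0 add0r.
Qed.

Lemma w_strict f g : f != 0 -> g != 0 -> ltof lew (wf f) (wf g) ->
  f + g != 0 /\ wf (f + g) = wf f.
Proof. exact: (ultra_strict Ow wN wult). Qed.

Lemma exists_center : exists a, forall n, (0 < n)%N -> forall g,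
  wf ('X - a%:P) *+ n <> emb g.
Proof.
apply: NNPP => hne.
have hall : forall c, exists n, (0 < n)%N /\ exists g, wf ('X - c%:P) *+ n = emb g.
  move=> c; apply: NNPP => h; apply: hne; exists c => n n0 g E; apply: h.
  by exists n; split => //; exists g.
have hf : forall f, f != 0 -> exists n, (0 < n)%N /\ exists g, wf f *+ n = emb g.
  apply: poly_ind_lin => //.
    by move=> c c0; exists 1%N; split => //; exists (v c); rewrite wC.
  move=> f g f0 g0 [n1 [n10 [g1 E1]]] [n2 [n20 [g2 E2]]].
  exists (n1 * n2)%N; split; first by rewrite muln_gt0 n10.
  exists (g1 *+ n2 + g2 *+ n1); rewrite wmul // mulrnDl emb_add !embMn.
  by rewrite mulrnA E1 mulnC mulrnA E2.
move: hvt => [g [[f [h [f0 h0 Eg]]] hg]].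
have [nf [nf0 [gf Ef]]] := hf f f0; have [nh [nh0 [gh Eh]]] := hf h h0.
apply: (hg (nf * nh)%N); first by rewrite muln_gt0 nf0.
rewrite Eg mulrnBl mulrnA Ef mulnC mulrnA Eh -!embMn -embN -emb_add.
reflexivity.
Qed.

Lemma part4 : exists a d, is_cut le d /\ val_equiv (omegaB le v a d) w.
Proof.
have [a ha] := exists_center.
set t := wf ('X - a%:P) in ha.
pose d := Cut (fun g => ltof lew (emb g) t) (fun g => ltof lew t (emb g)).
have Hd : is_cut le d.
  split.
  - move=> l r [hl1 hl2] [hr1 hr2] /=.
    have lr : lew (emb l) (emb r) by apply: (o_trans Ow hl1 hr1).
    split; first exact/emb_le.
    move=> e; subst r; apply: hl2; exact: (o_anti Ow hl1 hr1).
  - move=> g /=; case: (o_total Ow (emb g) t) => h; [left|right]; split => // e;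
      apply: (ha 1%N isT g); rewrite mulr1n //.
exists a, d; split => //.
pose iota (p : int * Γ) : pv_G w := t *~ p.1 + emb p.2.
have iotaD : forall p q, iota (p + q) = iota p + iota q.
  by move=> [k1 b1] [k2 b2]; rewrite /iota /= mulrzDr emb_add addrACA.
have iotaB : forall p q, iota (p - q) = iota p - iota q.
  by move=> [k1 b1] [k2 b2]; rewrite /iota /= mulrzBr emb_add embN opprD addrACA.
have X0 : forall c : L, 'X - c%:P != 0 by move=> c; rewrite polyXsubC_eq0.
have key : forall f, f != 0 -> wf f = iota (omega_fun le v a d f).
  apply: poly_ind_lin.
  - by move=> c c0; rewrite (omega_C hv a Hd Hdiv c0) wC // /iota /= mulr0z add0r.
  - move=> c; case: (classic (ball le v a d c)) => hc.
      rewrite (omega_lin_ball hv Hd Hdiv hc) /iota /= emb0 addr0.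
      have [ca|ca] := eqVneq c a; first by rewrite ca.
      have hr : cutR d (v (c - a)) by apply/(ball_R v Hd ca).
      have E : 'X - c%:P = ('X - a%:P) + (a - c)%:P by rewrite polyCB addrA subrK.
      have ac0 : (a - c)%:P != 0 by rewrite polyC_eq0 subr_eq0 eq_sym.
      have lt : ltof lew (wf ('X - a%:P)) (wf (a - c)%:P).
        by rewrite wC ?subr_eq0 1?eq_sym // (vsub_sym hv a c).
      by have [_ E2] := w_strict (X0 a) ac0 lt; rewrite E E2.
    rewrite (omega_lin_nball hv Hd Hdiv hc) /iota /= mulr0z add0r.
    have ca : c != a by apply/eqP => e; apply: hc; left.
    have hl : cutL d (v (c - a)).
      by case: (cut_part Hd (v (c - a))) => // hr; case: hc; apply/(ball_R v Hd ca).
    have E : 'X - c%:P = (a - c)%:P + ('X - a%:P) by rewrite [RHS]addrC polyCB addrA subrK.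
    have ac0 : (a - c)%:P != 0 by rewrite polyC_eq0 subr_eq0 eq_sym.
    have lt : ltof lew (wf (a - c)%:P) (wf ('X - a%:P)).
      by rewrite wC ?subr_eq0 1?eq_sym // (vsub_sym hv a c).
    have [_ E2] := w_strict ac0 (X0 a) lt.
    by rewrite E E2 wC ?subr_eq0 1?eq_sym // (vsub_sym hv a c).
  - move=> f g f0 g0 e1 e2.
    by rewrite wmul // (omega_mul hv a Hd Hdiv) // iotaD e1 e2.
have npos_io : forall k b, npos le d k b -> lew (t *~ k + emb b) 0.
  move=> k b; case: (ltrgtP k 0) => [kn|kp|->].
  - move/(nposN le d b kn) => [l [[hl _] hb]].
    have h1 : lew (emb b) (t *~ (- k)).
      apply: (o_trans Ow (iffRL (emb_le _ _) hb)); rewrite embMz.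
      by apply: (o_mulz Ow) => //; rewrite oppr_ge0 ltW.
    by have := o_addl Ow (t *~ k) h1; rewrite mulrNz subrr.
  - move/(nposP le d b kp) => [r [[hr _] hb]].
    have h1 : lew (t *~ k) (emb (r *~ k)).
      by rewrite embMz; apply: (o_mulz Ow) => //; exact: ltW.
    apply: (o_trans Ow (o_addr Ow (emb b) h1)); rewrite -emb_add -emb0; exact/emb_le.
  - by move/(npos0 le d b) => hb; rewrite mulr0z add0r -emb0; exact/emb_le.
have npos_iff : forall k b, npos le d k b <-> lew (t *~ k + emb b) 0.
  move=> k b; split; first exact: npos_io.
  move=> h; apply: NNPP => hn.
  case: (npos_total H Hd Hdiv k b) => // hn'.
  have h' := npos_io _ _ hn'; rewrite mulrNz embN -opprD in h'.
  have h2 : lew 0 (t *~ k + emb b) by have := o_opp Ow h'; rewrite opprK oppr0.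
  have E := o_anti Ow h h2.
  have Et : t *~ k = - emb b by apply/eqP; rewrite -addr_eq0 E.
  case: (ltrgtP k 0) => [kn|kp|k0].
  - have kp' : 0 < - k by rewrite oppr_gt0.
    have [n En] : exists n : nat, - k = n%:Z by case: (- k) kp' => [n|n] //; exists n.
    have n0 : (0 < n)%N by rewrite -ltz_nat -En.
    by apply: (ha n n0 b); rewrite pmulrn -En mulrNz Et opprK.
  - have [n En] : exists n : nat, k = n%:Z by case: k kp {h h2 E Et hn hn' h'} => [n|n] //; exists n.
    have n0 : (0 < n)%N by rewrite -ltz_nat -En.
    by apply: (ha n n0 (- b)); rewrite pmulrn -En Et embN.
  - apply: hn; rewrite k0; apply/npos0.
    have eb : - emb b = 0 by rewrite -Et k0 mulr0z.
    have b0 : b = 0.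
      by apply: emb_inj; move/eqP: eb; rewrite oppr_eq0 emb0 => /eqP.
    by rewrite b0; apply: (o_refl H).
have ord : forall p q, cut_le le d p q <-> lew (iota p) (iota q).
  move=> p q; rewrite cut_leE npos_iff.
  have -> : t *~ (p.1 - q.1) + emb (p.2 - q.2) = iota p - iota q by rewrite -iotaB.
  by split => h; [exact: (iffRL (o_sub0 Ow _ _) h) | exact: (iffLR (o_sub0 Ow _ _) h)].
exists iota; split.
- by move=> x [f [h [f0 h0 ->]]]; exists f, h; split => //; rewrite iotaB -!key.
- by move=> x y _ _; exact: iotaD.
- by move=> x y _ _; exact: ord.
- move=> x [f [h [f0 h0 ->]]]; exists (omega_fun le v a d f - omega_fun le v a d h).
    by exists f, h.
  by rewrite iotaB -!key.
- exact: key.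
Qed.

End Surj.

Section Order5.
Variables (L : closedFieldType) (Γ : zmodType) (le : Γ -> Γ -> Prop) (v : L -> Γ)
  (hv : is_valuation le v).

Let H := v_oag hv.
Let Hdiv := v_div hv.
Notation om a d := (omega_fun le v a d).

Lemma ball_center a b d : is_cut le d -> ball le v a d b ->
  forall c, ball le v a d c -> ball le v b d c.
Proof.
move=> Hd hb; apply: (ball_sub_of hv Hd Hd) => //.
have [ba|ba] := eqVneq b a; first by rewrite ba; left.
have ab : a != b by rewrite eq_sym.
apply/(ball_R v Hd ab); rewrite (vsub_sym hv a b); exact/(ball_R v Hd ba).
Qed.

Lemma part5 a b d e : is_cut le d -> is_cut le e ->
  ((forall c, ball le v b e c -> ball le v a d c) <->
   val_le (omegaB le v a d) (omegaB le v b e)).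
Proof.
move=> Hd He.
have Od := cut_oag H Hd Hdiv; have Oe := cut_oag H He Hdiv.
have X0 : forall c : L, 'X - c%:P != 0 by move=> c; rewrite polyXsubC_eq0.
split.
  move=> hs.
  case: (classic (forall c, ball le v a d c -> ball le v b e c)) => hs'.
    left; apply: (part2 hv Hd He) => c; split; [exact: hs'|exact: hs].
  right.
  have [hb hR] := ball_sub_char hv Hd He hs.
  have [g0 [hg0d hg0e]] : exists g, cutR d g /\ cutL e g.
    apply: NNPP => hne; apply: hs'.
    have hR' : forall g, cutR d g -> cutR e g.
      move=> g hg; apply: NNPP => hn; apply: hne; exists g; split => //.
      exact/(cutL_notR He).
    apply: (ball_sub_of hv He Hd) => //.
    have [ab|ab] := eqVneq a b; first by rewrite ab; left.
    have ba : b != a by rewrite eq_sym.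
    apply/(ball_R v He ab); rewrite (vsub_sym hv a b); apply: hR'.
    exact/(ball_R v Hd ba).
  apply: (@poly_ind_lin L (fun f => exists c, cut_le le d (om a d f) (0, c) /\
     cut_le le e (0, c) (om b e f))).
  - move=> c c0; exists (v c); rewrite !(omega_C hv _ _ Hdiv) //.
    by split; apply: (o_refl _).
  - move=> c; case: (classic (ball le v b e c)) => hc.
      exists g0; rewrite (omega_lin_ball hv Hd Hdiv (hs _ hc)).
      rewrite (omega_lin_ball hv He Hdiv hc); split.
        exact/(cut_le10 H Hd).
      exact/(cut_le01 H He).
    rewrite (omega_lin_nball hv He Hdiv hc).
    have cb : c != b by apply/eqP => e0; apply: hc; left.
    case: (classic (ball le v a d c)) => hca.
      exists (v (c - b)); rewrite (omega_lin_ball hv Hd Hdiv hca); split; last first.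
        exact: (o_refl Oe).
      apply/(cut_le10 H Hd); apply/(ball_R v Hd cb).
      exact: (ball_center Hd hb hca).
    exists (v (c - a)); rewrite (omega_lin_nball hv Hd Hdiv hca); split.
      exact: (o_refl Od).
    apply: (iffRL (cut_le00 H e _ _)).
    have -> : v (c - b) = v (c - a).
      have [ba|ba] := eqVneq b a; first by rewrite ba.
      have ca : c != a by apply/eqP => e0; apply: hca; left.
      have hl : cutL d (v (c - a)).
        by case: (cut_part Hd (v (c - a))) => // hr; case: hca; apply/(ball_R v Hd ca).
      have hbr : cutR d (v (b - a)) by apply/(ball_R v Hd ba).
      have c0 : c - a != 0 by rewrite subr_eq0.
      have ab0 : a - b != 0 by rewrite subr_eq0 eq_sym.
      have lt : ltof le (v (c - a)) (v (a - b)).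
        by rewrite (vsub_sym hv a b); apply: (cut_LR Hd hl hbr).
      have [_ vs] := v_strict hv c0 ab0 lt.
      by rewrite -vs addrA subrK.
    exact: (o_refl H).
  - move=> f g fn gn [g1 [h1 h2]] [g2 [h3 h4]]; exists (g1 + g2).
    rewrite !(omega_mul hv _ _ Hdiv) //.
    have -> : ((0, g1 + g2) : int * Γ) = (0, g1) + (0, g2) by rewrite pairD addr0.
    by split; apply: (o_add _).
case.
  move=> heq c; exact: (iffRL (part3 hv Hd He heq c)).
move=> hsw.
have [g [h1 h2]] := hsw _ (X0 a); move: h1 h2 => /= h1 h2.
rewrite (omega_lin_a hv a Hd Hdiv) in h1; move/(cut_le10 H Hd): h1 => hgd.
have [hge hb] : cutL e g /\ ball le v a d b.
  case: (classic (ball le v b e a)) => ha.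
    rewrite (omega_lin_ball hv He Hdiv ha) in h2; move/(cut_le01 H He): h2 => hge.
    split => //.
    have [ab|ab] := eqVneq a b; first by rewrite ab; left.
    have ba : b != a by rewrite eq_sym.
    apply/(ball_R v Hd ba); rewrite (vsub_sym hv b a).
    have hr : cutR e (v (a - b)) by apply/(ball_R v He ab).
    have gl : le g (v (a - b)) by case: (cut_LR He hge hr).
    exact: (cutR_up H Hd hgd gl).
  rewrite (omega_lin_nball hv He Hdiv ha) in h2; move/(cut_le00 H): h2 => gl.
  have ab : a != b by apply/eqP => e0; apply: ha; left.
  have hl : cutL e (v (a - b)).
    by case: (cut_part He (v (a - b))) => // hr; case: ha; apply/(ball_R v He ab).
  split; first exact: (cutL_down H He hl gl).
  have ba : b != a by rewrite eq_sym.
  apply/(ball_R v Hd ba); rewrite (vsub_sym hv b a).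
  exact: (cutR_up H Hd hgd gl).
apply: (ball_sub_of hv Hd He hb) => r hr.
have gr : le g r by case: (cut_LR He hge hr).
exact: (cutR_up H Hd hgd gr).
Qed.

End Order5.

Theorem theorem2p7 (L : closedFieldType) (Γ : zmodType) (le : Γ -> Γ -> Prop)
    (v : L -> Γ) (hv : is_valuation le v) :
  (* the map B(a,δ) |-> ω_{B(a,δ)} is well defined with values in V_vt *)
  (forall (a : L) (d : cut Γ), is_cut le d ->
     is_ext_val le v (omegaB le v a d) /\
     value_transcendental (omegaB le v a d)) /\
  (forall (a b : L) (d e : cut Γ), is_cut le d -> is_cut le e ->
     (forall c, ball le v a d c <-> ball le v b e c) ->
     val_equiv (omegaB le v a d) (omegaB le v b e)) /\
  (* injective *)
  (forall (a b : L) (d e : cut Γ), is_cut le d -> is_cut le e ->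
     val_equiv (omegaB le v a d) (omegaB le v b e) ->
     forall c, ball le v a d c <-> ball le v b e c) /\
  (* surjective *)
  (forall w : pvaluation L Γ, is_ext_val le v w -> value_transcendental w ->
     exists (a : L) (d : cut Γ), is_cut le d /\ val_equiv (omegaB le v a d) w) /\
  (* order isomorphism: B ⊇ C  <->  ω_B ≤ ω_C *)
  (forall (a b : L) (d e : cut Γ), is_cut le d -> is_cut le e ->
     ((forall c, ball le v b e c -> ball le v a d c) <->
      val_le (omegaB le v a d) (omegaB le v b e))).
Proof.
split; first by move=> a d Hd; apply: part1.
split; first by move=> a b d e Hd He; apply: part2.
split; first by move=> a b d e Hd He; apply: part3.
split; first by move=> w hw hvt; apply: (part4 hv hw hvt).
by move=> a b d e Hd He; apply: part5.
Qed.
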